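(* Let $G$ be an abelian Lie group whose identity component $G^0$ has finite index in $G$. If $S$ is a finitely generated subsemigroup of $G$ which is somewhere dense in $G$ (i.e. $\overline{S}$ contains a non-empty open subset of $G$), then $S\cap G^0$ contains a finitely generated subsemigroup of $G^0$ which is somewhere dense in $G^0$. *)

(* Defs.v *)
From HB Require Import structures.
From mathcomp Require Import all_boot all_order all_algebra.
From mathcomp Require Import all_classical all_reals all_analysis.
From mathcomp Require Import Rstruct Rstruct_topology.
From Stdlib Require Rdefinitions.

Set Implicit Arguments.
Unset Strict Implicit.
Unset Printing Implicit Defensive.

Import Order.TTheory GRing.Theory Num.Theory.
Local Open Scope classical_set_scope.
Local Open Scope ring_scope.

Definition locally_euclidean (G : topologicalType) (n : nat) : Prop :=
  forall x : G, exists (U : set G) (f : G -> 'rV[Rdefinitions.R]_n)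
                       (g : 'rV[Rdefinitions.R]_n -> G),
    [/\ open U, U x, open (f @` U),
        {within U, continuous f} /\ {within f @` U, continuous g} &
        (forall y, U y -> g (f y) = y)].

(* An abelian Lie group, topologically: a Hausdorff abelian topological group
   which is a topological manifold (Gleason--Montgomery--Zippin: such a group
   carries a unique compatible real-analytic Lie group structure). *)
Definition abelian_Lie_group (G : topologicalZmodType) : Prop :=
  hausdorff_space G /\ exists n : nat, locally_euclidean G n.

Definition identity_component (G : topologicalZmodType) : set G :=
  connected_component setT 0.
Arguments identity_component G : clear implicits.

Definition finite_index (G : zmodType) (H : set G) : Prop :=
  exists s : seq G, forall x : G, exists2 g, g \in s & H (x - g).

Definition subsemigroup_gen (G : zmodType) (A : set G) : set G :=
  \bigcap_(B in [set B : set G | A `<=` B /\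
                   (forall x y, B x -> B y -> B (x + y))]) B.

Definition fg_subsemigroup (G : zmodType) (S : set G) : Prop :=
  exists s : seq G, S = subsemigroup_gen [set x | x \in s].

(* S is somewhere dense in the subspace H of G: the closure of S in H
   (= closure S `&` H) contains a non-empty relatively open subset of H. *)
Definition somewhere_dense_in (G : topologicalType) (H S : set G) : Prop :=
  exists V : set G, [/\ open V, (V `&` H) !=set0 & V `&` H `<=` closure S `&` H].

(* Main.v *)
Require Import Defs.
From HB Require Import structures.
From mathcomp Require Import all_boot all_order all_algebra.
From mathcomp Require Import all_classical all_reals all_analysis.

Unset Strict Implicit.
Unset Printing Implicit Defensive.
Import Order.TTheory GRing.Theory Num.Theory.
Local Open Scope classical_set_scope.
Local Open Scope ring_scope.

Section Aux.
Variable G : topologicalZmodType.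

Lemma transl_cont (c : G) : continuous (fun x : G => x + c).
Proof.
move=> x; apply: (@continuous_comp _ _ _ (fun x => (x, c)) (fun x : G * G => x.1 + x.2)).
  by apply: cvg_pair; [exact: cvg_id | exact: cvg_cst].
exact: add_continuous.
Qed.

Lemma transl_open (c : G) (W : set G) : open W -> open [set x | W (x + c)].
Proof. by move=> oW; have := (continuousP _).1 (transl_cont c) W oW. Qed.

Lemma transl_closed (c : G) (W : set G) : closed W -> closed [set x | W (x + c)].
Proof. move=> cW; apply: preimage_closed => //; move=> x _; exact: transl_cont. Qed.

Local Notation H := (identity_component G).

Lemma H0 : H 0.
Proof. exact: connected_component_refl. Qed.

Lemma HD x y : H x -> H y -> H (x + y).
Proof.
move=> Hx Hy.
have cI : connected ((fun z => z + x) @` H).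
  apply: connected_continuous_connected; first exact: component_connected.
  move=> z; exact: continuous_subspaceT (transl_cont x) _.
have sub := connected_component_max (A := setT) (x := x) _ (fun _ _ => I) cI.
rewrite /identity_component (same_connected_component Hx).
apply: sub; first by exists 0; [exact: H0| rewrite add0r].
by exists y => //; rewrite addrC.
Qed.

Lemma HN x : H x -> H (- x).
Proof.
move=> Hx.
have cI : connected ((fun z : G => - z) @` H).
  apply: connected_continuous_connected; first exact: component_connected.
  move=> z; exact: continuous_subspaceT (@opp_continuous G) _.
have sub := connected_component_max (A := setT) (x := 0) _ (fun _ _ => I) cI.
apply: sub; first by exists 0; [exact: H0| rewrite oppr0].
by exists x.
Qed.

Lemma HB x y : H x -> H y -> H (x - y).
Proof. by move=> Hx Hy; apply: HD => //; exact: HN. Qed.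

Lemma HMn x n : H x -> H (x *+ n).
Proof. by move=> Hx; elim: n => [|n IH]; [rewrite mulr0n; exact: H0| rewrite mulrS; exact: HD]. Qed.

Lemma H_closed : closed H.
Proof. exact: component_closed closedT. Qed.

Lemma pigeon (cs : seq G) : (forall x : G, exists2 g, g \in cs & H (x - g)) ->
  forall a : G, exists2 k, (0 < k)%N & H (a *+ k).
Proof.
move=> hcs a.
have hrep : forall i : 'I_(size cs).+1, exists j : 'I_(size cs), H (a *+ i - cs`_j).
  move=> i; have [g gin Hg] := hcs (a *+ i).
  have lt : (index g cs < size cs)%N by rewrite index_mem.
  by exists (Ordinal lt); rewrite /= nth_index.
have [f hf] := choice hrep.
apply: contrapT => nok.
have finj : injective f.
  move=> i j eqij; apply: contrapT => neq.
  wlog lt : i j eqij neq / (i < j)%N.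
    move=> W; case: (ltngtP i j) => [l|l|/val_inj e]; first exact: W l.
      by apply: (W j i) => // e; apply: neq.
    by apply: neq.
  apply: nok; exists (j - i)%N; first by rewrite subn_gt0.
  rewrite mulrnBr; last exact: ltnW.
  have := HB _ _ (hf j) (hf i); rewrite eqij.
  by rewrite opprB addrA subrK.
by have := leq_card _ finj; rewrite !card_ord ltnn.
Qed.

Lemma uniformK (cs : seq G) : (forall x : G, exists2 g, g \in cs & H (x - g)) ->
  forall s : seq G, exists2 K, (0 < K)%N & forall a, a \in s -> H (a *+ K).
Proof.
move=> hcs; elim=> [|a s [K K0 IH]]; first by exists 1%N.
have [k k0 Hk] := pigeon _ hcs a.
exists (k * K)%N; first by rewrite muln_gt0 k0.
move=> b; rewrite inE => /orP[/eqP->|bs].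
  by rewrite mulrnA; exact: HMn.
by rewrite mulnC mulrnA; exact: HMn _ _ (IH b bs).
Qed.
End Aux.

Section Gen.
Variable G : zmodType.

Lemma gen_sub (A B : set G) : A `<=` B -> (forall x y, B x -> B y -> B (x + y)) ->
  subsemigroup_gen A `<=` B.
Proof. by move=> AB cB x hx; apply: hx; split. Qed.

Lemma gen_incl (A : set G) : A `<=` subsemigroup_gen A.
Proof. by move=> x Ax B [AB _]; exact: AB. Qed.

Lemma gen_add (A : set G) x y : subsemigroup_gen A x -> subsemigroup_gen A y ->
  subsemigroup_gen A (x + y).
Proof. by move=> hx hy B [AB cB]; apply: (cB); [exact: (hx B (conj AB cB))|exact: (hy B (conj AB cB))]. Qed.

Lemma gen_mulrn (A : set G) x n : (0 < n)%N -> subsemigroup_gen A x ->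
  subsemigroup_gen A (x *+ n).
Proof.
case: n => // n _ hx; elim: n => [|n IH]; first by rewrite mulr1n.
by rewrite mulrS; exact: gen_add.
Qed.

Variable K : nat.
Hypothesis K0 : (0 < K)%N.
Variable T0 : set G.
Hypothesis T00 : T0 0.
Hypothesis T0D : forall x y, T0 x -> T0 y -> T0 (x + y).

Lemma T0Mn t n : T0 t -> T0 (t *+ n).
Proof. by move=> ht; elim: n => [|n IH]; rewrite ?mulr0n ?mulrS //; exact: T0D. Qed.

Fixpoint Fs (l : seq G) : seq G :=
  match l with [::] => [:: 0] | a :: l' => [seq a *+ r + g | r <- iota 0 K, g <- Fs l'] end.

Lemma Fs0 l : 0 \in Fs l.
Proof.
elim: l => [|a l IH] /=; first by rewrite inE.
have -> : (0 : G) = a *+ 0 + 0 by rewrite mulr0n addr0.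
by apply: allpairs_f => //; rewrite mem_iota.
Qed.

Lemma Fs_mul l a n : a \in l -> (forall b, b \in l -> T0 (b *+ K)) ->
  exists2 f, f \in Fs l & exists2 t, T0 t & a *+ n = f + t.
Proof.
elim: l => [|b l IH] //= ; rewrite inE => /orP[/eqP ->|al] hT.
  exists (b *+ (n %% K) + 0).
    by apply: allpairs_f; [rewrite mem_iota ltn_mod K0|exact: Fs0].
  exists ((b *+ K) *+ (n %/ K)); first by apply: T0Mn; apply: hT; rewrite inE eqxx.
  by rewrite addr0 -mulrnA addrC -mulrnDr mulnC -divn_eq.
have hT' : forall c, c \in l -> T0 (c *+ K) by move=> c cl; apply: hT; rewrite inE cl orbT.
have [f fin [t tT e]] := IH al hT'.
exists (b *+ 0 + f); first by apply: allpairs_f; rewrite // mem_iota.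
by exists t; rewrite // mulr0n add0r.
Qed.

Lemma Fs_add l f1 f2 : (forall b, b \in l -> T0 (b *+ K)) ->
  f1 \in Fs l -> f2 \in Fs l -> exists2 f, f \in Fs l & exists2 t, T0 t & f1 + f2 = f + t.
Proof.
elim: l f1 f2 => [|b l IH] f1 f2 hT /=.
  by rewrite !inE => /eqP-> /eqP->; exists 0; rewrite ?inE //; exists 0; rewrite ?addr0.
move=> /allpairsP[[r1 g1] [/= r1in g1in ->]] /allpairsP[[r2 g2] [/= r2in g2in ->]].
have hT' : forall c, c \in l -> T0 (c *+ K) by move=> c cl; apply: hT; rewrite inE cl orbT.
have [g gin [t tT e]] := IH g1 g2 hT' g1in g2in.
exists (b *+ ((r1 + r2) %% K) + g).
  by apply: allpairs_f; [rewrite mem_iota ltn_mod K0|].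
exists ((b *+ K) *+ ((r1 + r2) %/ K) + t).
  by apply: T0D => //; apply: T0Mn; apply: hT; rewrite inE eqxx.
rewrite addrACA e -mulrnDr.
rewrite {1}(divn_eq (r1 + r2) K) mulrnDr mulnC mulrnA.
by rewrite [_ + b *+ ((r1 + r2) %% K)]addrC addrACA.
Qed.
End Gen.

Section Top.
Variable T : topologicalType.

Lemma union_closed (I : eqType) (C : I -> set T) (l : seq I) :
  (forall i, closed (C i)) -> closed [set x | exists2 i, i \in l & C i x].
Proof.
move=> cC; elim: l => [|a l IH].
  have -> : [set x | exists2 i, i \in [::] & C i x] = set0.
    by apply/seteqP; split => x // [].
  exact: closed0.
have -> : [set x | exists2 i, i \in a :: l & C i x] =
  C a `|` [set x | exists2 i, i \in l & C i x].
  apply/seteqP; split => x.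
    by move=> [i]; rewrite inE => /orP[/eqP->|il] Cx; [left|right; exists i].
  by case=> [Cx|[i il Cx]]; [exists a; rewrite ?inE ?eqxx|exists i; rewrite ?inE ?il ?orbT].
exact: closedU.
Qed.

Lemma union_interior (I : eqType) (C : I -> set T) (l : seq I) (W : set T) :
  (forall i, closed (C i)) -> open W -> W !=set0 ->
  W `<=` [set x | exists2 i, i \in l & C i x] ->
  exists i, exists W', [/\ i \in l, open W', W' !=set0 & W' `<=` C i].
Proof.
move=> cC; elim: l W => [|a l IH] W oW [w Ww] sub.
  by have [i] := sub w Ww.
have [[z [Wz Cz]]|emp] := pselect ((W `&` ~` C a) !=set0).
  have o1 : open (W `&` ~` C a) by apply: openI => //; apply: closed_openC.
  have n1 : (W `&` ~` C a) !=set0 by exists z.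
  have s1 : W `&` ~` C a `<=` [set x | exists2 i, i \in l & C i x].
    move=> x [Wx nCx]; have [i] := sub x Wx; rewrite inE => /orP[/eqP->//|il] Cix.
    by exists i.
  have [i [W' [il oW' ne sW']]] := IH _ o1 n1 s1.
  by exists i, W'; split => //; rewrite inE il orbT.
exists a, W; split => //; first by rewrite inE eqxx.
  by exists w.
move=> x Wx; apply: contrapT => nCx; apply: emp; by exists x.
Qed.
End Top.

Theorem lemma2p5 (G : topologicalZmodType) (S : set G) :
  abelian_Lie_group G ->
  finite_index (identity_component G) ->
  fg_subsemigroup S ->
  somewhere_dense_in setT S ->
  exists T : set G,
    [/\ T `<=` S `&` identity_component G,
        fg_subsemigroup T &
        somewhere_dense_in (identity_component G) T].
Proof.
move=> [hG _] [cs hcs] [s ->] [V [oV [v [Vv _]] Vcl]].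
have [a0 as0] : exists a, a \in s.
  case: s Vcl => [|a s] Vcl; last by exists a; rewrite inE eqxx.
  exfalso; have [clv _] := Vcl v (conj Vv I).
  have e0 : subsemigroup_gen [set x : G | x \in [::]] = set0.
    by apply/seteqP; split => x //; apply: gen_sub => y.
  by move: clv; rewrite e0 closure0.
have [K K0 HK] := uniformK G cs hcs s.
set S0 := subsemigroup_gen [set x | x \in s].
set T' := subsemigroup_gen [set x | x \in [seq a *+ K | a <- s]].
set T0 : set G := [set x | T' x \/ x = 0].
have T00 : T0 0 by right.
have T0D : forall x y, T0 x -> T0 y -> T0 (x + y).
  move=> x y [Tx|->] [Ty|->]; rewrite ?addr0 ?add0r; try by right.
  - by left; apply: gen_add.
  - by left.
  - by left.
have hT : forall b, b \in s -> T0 (b *+ K).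
  by move=> b bs; left; apply: gen_incl; exact: (map_f (fun a : G => a *+ K)).
have SB : S0 `<=` [set x | exists2 f, f \in Fs _ K s & exists2 t, T0 t & x = f + t].
  apply: gen_sub.
    move=> a /= as_; have := Fs_mul _ _ K0 _ T00 T0D _ _ 1 as_ hT.
    by rewrite mulr1n.
  move=> x y [f1 f1in [t1 t1T ->]] [f2 f2in [t2 t2T ->]].
  have [f fin [t tT e]] := Fs_add _ _ K0 _ T00 T0D _ _ _ hT f1in f2in.
  exists f => //; exists (t + (t1 + t2)); first by apply: (T0D) => //; apply: (T0D).
  by rewrite addrACA e -addrA.
have T'sub : T' `<=` S0 `&` identity_component G.
  apply: gen_sub.
    move=> x /= /mapP[a as_ ->]; split; last exact: HK.
    by apply: gen_mulrn => //; apply: gen_incl.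
  by move=> x y [Sx Hx] [Sy Hy]; split; [apply: gen_add|apply: HD].
set C := fun f : G => [set x | closure T0 (x - f)].
have cC : forall f, closed (C f) by move=> f; apply: transl_closed; exact: closed_closure.
set U := [set x | exists2 f, f \in Fs _ K s & C f x].
have VU : V `<=` U.
  have cU : closed U := union_closed _ _ _ (Fs _ K s) cC.
  move=> x Vx; have [clx _] := Vcl x (conj Vx I).
  have eU := (closure_id U).1 cU; rewrite eU.
  apply: closureS clx => z /SB [f fin [t tT ->]]; exists f => //.
  by rewrite /C /= addrC addKr; apply: subset_closure.
have [f [W [fin oW [w Ww] sW]]] := union_interior _ _ _ _ _ cC oV (ex_intro _ v Vv) VU.
set W2 := [set z | W (z + f)].
have oW2 : open W2 by apply: transl_open.
have nW2 : W2 !=set0 by exists (w - f); rewrite /W2 /= subrK.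
have c0 : closed [set (0 : G)] by apply: accessible_closed_set1; apply: hausdorff_accessible.
set D := fun b : bool => if b then closure T' else [set (0 : G)].
have cD : forall b, closed (D b) by case; [exact: closed_closure|exact: c0].
have W2D : W2 `<=` [set x | exists2 b, b \in [:: true; false] & D b x].
  move=> z Wz; have := sW _ Wz; rewrite /C /= addrK.
  have -> : T0 = T' `|` [set 0] by apply/seteqP; split => x [] ?; by [left|right].
  by rewrite closureU -((closure_id [set (0:G)]).1 c0) => -[?|?]; [exists true|exists false].
have [b [W' [_ oW' [w' Ww'] sW']]] := union_interior _ _ _ _ _ cD oW2 nW2 W2D.
have clH : closure (identity_component G) `<=` identity_component G.
  by rewrite -((closure_id _).1 (H_closed G)).
exists T'; split.
- exact: T'sub.
- by exists [seq a *+ K | a <- s].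
case: b sW' => sW'.
  exists W'; split => //.
    exists w'; split => //; apply: clH; apply: (closureS (fun x Tx => (T'sub x Tx).2)).
    exact: sW'.
  by move=> x [Wx Hx]; split => //; exact: sW'.
have o0 : open [set (0 : G)].
  have -> : [set (0 : G)] = W'; last by [].
  apply/seteqP; split => x; last exact: sW'.
  by move=> ->; have <- : w' = 0 by exact: sW'.
have Ty : T' (a0 *+ K) by apply: gen_incl; exact: (map_f (fun a : G => a *+ K)).
exists [set z | [set (0 : G)] (z + - (a0 *+ K))]; split.
- exact: transl_open.
- by exists (a0 *+ K); split; [rewrite /= subrr|exact: (T'sub _ Ty).2].
- move=> x [/= /eqP]; rewrite subr_eq0 => /eqP -> Hx; split => //.
  exact: subset_closure.
Qed.
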